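(* Let $\alpha,\beta>0$ and $0<\delta\le1$, and let the inverse demand function be $p(q)=\max\{\alpha-\beta q^{\delta},0\}$ for $q\ge0$. Suppose the cost functions satisfy Assumptions 1, 3 and 4. Then every Cournot equilibrium $\mathbf{x}$ satisfies $\gamma(\mathbf{x})\ge f\big((\delta+1)^{(1-\delta)/\delta}\big)$.
   Context: Cournot model: $N$ suppliers, inverse demand $p$, supplier $n$ has cost $C_n:[0,\infty)\to[0,\infty)$ and chooses $x_n\ge0$; $X=\sum_n x_n$; payoff of $n$ is $x_np(X)-C_n(x_n)$. A Cournot equilibrium is a profile $\mathbf{x}\ge0$ such that no supplier can increase its payoff by unilaterally changing its quantity to any $x\ge0$. $C_n'(0)$ is the right derivative at $0$. Assumption 1: each $C_n$ is convex, continuous, nondecreasing on $[0,\infty)$, continuously differentiable on $(0,\infty)$, with $C_n(0)=0$. Assumption 3: there exists $R>0$ such that $p(R)\le\min_n C_n'(0)$. Assumption 4: $p(0)>\min_n C_n'(0)$. Social welfare of $\mathbf{x}\ge0$: $W(\mathbf{x})=\int_0^X p(q)\,dq-\sum_{n=1}^N C_n(x_n)$; a social optimum $\mathbf{x}^S$ maximizes $W$. Efficiency: $\gamma(\mathbf{x})=W(\mathbf{x})/W(\mathbf{x}^S)$. For $\overline c\ge1$: $f(\overline c)=\dfrac{\phi^2+2}{\phi^2+2\phi+\overline c}$ with $\phi=\max\left\{\dfrac{2-\overline c+\sqrt{\overline c^{\,2}-4\overline c+12}}{2},1\right\}$. *)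

(* Defs.v *)
From Stdlib Require Import Reals Lra ClassicalEpsilon.
Open Scope R_scope.

(* q^d for real exponent, with the convention 0^d = 0 (d > 0). *)
Definition rpow (q d : R) : R := if Req_EM_T q 0 then 0 else Rpower q d.

Definition pdem (alpha beta delta q : R) : R := Rmax (alpha - beta * rpow q delta) 0.

(* The Riemann integral of f over [a,b] (the unique value RiemannInt pr,
   for any integrability proof pr; chosen by epsilon). *)
Definition RInt (f : R -> R) (a b : R) : R :=
  epsilon (inhabits 0)
    (fun I => exists pr : Riemann_integrable f a b, RiemannInt pr = I).

Fixpoint sumN (N : nat) (g : nat -> R) : R :=
  match N with O => 0 | S k => sumN k g + g k end.

Definition total (N : nat) (x : nat -> R) : R := sumN N x.

Definition nonneg_profile (N : nat) (x : nat -> R) : Prop :=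
  forall n, (n < N)%nat -> 0 <= x n.

Definition payoff (p : R -> R) (C : nat -> R -> R) (N : nat) (x : nat -> R) (n : nat) : R :=
  x n * p (total N x) - C n (x n).

Definition update (x : nat -> R) (n : nat) (y : R) : nat -> R :=
  fun m => if Nat.eq_dec m n then y else x m.

Definition cournot_eq (p : R -> R) (C : nat -> R -> R) (N : nat) (x : nat -> R) : Prop :=
  nonneg_profile N x /\
  forall n y, (n < N)%nat -> 0 <= y ->
    payoff p C N (update x n y) n <= payoff p C N x n.

Definition welfare (p : R -> R) (C : nat -> R -> R) (N : nat) (x : nat -> R) : R :=
  RInt p 0 (total N x) - sumN N (fun n => C n (x n)).

Definition social_opt (p : R -> R) (C : nat -> R -> R) (N : nat) (xS : nat -> R) : Prop :=
  nonneg_profile N xS /\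
  forall x, nonneg_profile N x -> welfare p C N x <= welfare p C N xS.

Definition efficiency (p : R -> R) (C : nat -> R -> R) (N : nat) (x xS : nat -> R) : R :=
  welfare p C N x / welfare p C N xS.

Definition right_deriv0 (c : R -> R) (d : R) : Prop :=
  forall eps, 0 < eps -> exists del, 0 < del /\
    forall h, 0 < h < del -> Rabs ((c h - c 0) / h - d) < eps.

Definition assumption1 (c : R -> R) : Prop :=
  (forall x y t, 0 <= x -> 0 <= y -> 0 <= t <= 1 ->
     c (t * x + (1 - t) * y) <= t * c x + (1 - t) * c y) /\
  (forall x eps, 0 <= x -> 0 < eps -> exists del, 0 < del /\
     forall y, 0 <= y -> Rabs (y - x) < del -> Rabs (c y - c x) < eps) /\
  (forall x y, 0 <= x <= y -> c x <= c y) /\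
  (exists c' : R -> R, forall x, 0 < x ->
     derivable_pt_lim c x (c' x) /\ continuity_pt c' x) /\
  c 0 = 0.

Definition phi_f (cb : R) : R :=
  Rmax ((2 - cb + sqrt (cb ^ 2 - 4 * cb + 12)) / 2) 1.

Definition f_bound (cb : R) : R :=
  let phi := phi_f cb in (phi ^ 2 + 2) / (phi ^ 2 + 2 * phi + cb).

(* Main.v *)
Require Import Defs.
From Stdlib Require Import Reals Lra Lia Classical ClassicalEpsilon.
From Coquelicot Require Import Coquelicot.
Open Scope R_scope.

Lemma sumN_ext N g h : (forall n, (n < N)%nat -> g n = h n) -> sumN N g = sumN N h.
Proof. induction N; simpl; intros H; auto. rewrite IHN by (intros; apply H; lia). rewrite H by lia. auto. Qed.

Lemma sumN_le N g h : (forall n, (n < N)%nat -> g n <= h n) -> sumN N g <= sumN N h.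
Proof. induction N; simpl; intros H; [lra|]. assert (sumN N g <= sumN N h) by (apply IHN; intros; apply H; lia). specialize (H N ltac:(lia)). lra. Qed.

Lemma sumN_plus N g h : sumN N (fun n => g n + h n) = sumN N g + sumN N h.
Proof. induction N; simpl; [lra|]. rewrite IHN; lra. Qed.

Lemma sumN_scal N k g : sumN N (fun n => k * g n) = k * sumN N g.
Proof. induction N; simpl; [lra|]. rewrite IHN; lra. Qed.

Lemma sumN_const0 N : sumN N (fun _ => 0) = 0.
Proof. induction N; simpl; [lra|]. rewrite IHN; lra. Qed.

Lemma sumN_nonneg N g : (forall n, (n < N)%nat -> 0 <= g n) -> 0 <= sumN N g.
Proof. intros H. rewrite <- (sumN_const0 N). apply sumN_le. auto. Qed.

Lemma sumN_term N g m : (forall n, (n < N)%nat -> 0 <= g n) -> (m < N)%nat -> g m <= sumN N g.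
Proof. induction N; simpl; intros H Hm; [lia|].
  destruct (Nat.eq_dec m N) as [->|Hne].
  - assert (0 <= sumN N g) by (apply sumN_nonneg; intros; apply H; lia). lra.
  - assert (g m <= sumN N g) by (apply IHN; [intros; apply H; lia| lia]). specialize (H N ltac:(lia)). lra. Qed.

Lemma sumN_update N x n y : (n < N)%nat -> sumN N (update x n y) = sumN N x - x n + y.
Proof. induction N; simpl; intros Hn; [lia|]. unfold update at 2.
  destruct (Nat.eq_dec N n) as [->|Hne].
  - rewrite (sumN_ext n (update x n y) x). lra. intros k Hk. unfold update. destruct (Nat.eq_dec k n); [lia|auto].
  - rewrite IHN by lia. lra. Qed.

Lemma update_same x n y : update x n y n = y.
Proof. unfold update. destruct (Nat.eq_dec n n); congruence. Qed.

Lemma update_other x n y m : m <> n -> update x n y m = x m.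
Proof. unfold update. destruct (Nat.eq_dec m n); congruence. Qed.

Lemma argmax N x : (0 < N)%nat -> exists m, (m < N)%nat /\ forall n, (n < N)%nat -> x n <= x m.
Proof. induction N; intros H; [lia|]. destruct N.
  - exists 0%nat. split; [lia|]. intros k Hk. assert (k = 0%nat) by lia. subst; lra.
  - destruct IHN as [m [Hm Hmax]]; [lia|].
    destruct (Rle_dec (x (S N)) (x m)).
    + exists m. split; [lia|]. intros k Hk. destruct (Nat.eq_dec k (S N)); [subst; auto| apply Hmax; lia].
    + exists (S N). split; [lia|]. intros k Hk. destruct (Nat.eq_dec k (S N)); [subst; lra|].
      specialize (Hmax k ltac:(lia)). lra. Qed.


Lemma rpow_pos q d : 0 < q -> rpow q d = Rpower q d.
Proof. intros H. unfold rpow. destruct (Req_EM_T q 0); [lra|auto]. Qed.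

Lemma rpow_0 d : rpow 0 d = 0.
Proof. unfold rpow. destruct (Req_EM_T 0 0); [auto|lra]. Qed.

Lemma Rpower_gt0 q d : 0 < Rpower q d.
Proof. unfold Rpower. apply exp_pos. Qed.

Lemma rpow_nonneg q d : 0 <= rpow q d.
Proof. unfold rpow. destruct (Req_EM_T q 0); [lra|]. left; apply Rpower_gt0. Qed.

Lemma exp_convex d L : 0 <= d <= 1 -> exp (d * L) <= d * exp L + (1 - d).
Proof. intros Hd. set (m := d * L).
  assert (E1: exp L = exp m * exp (L - m)) by (rewrite <- exp_plus; f_equal; lra).
  assert (E2: 1 = exp m * exp (- m)) by (rewrite <- exp_plus; replace (m + - m) with 0 by lra; now rewrite exp_0).
  pose proof (exp_ineq1_le (L - m)). pose proof (exp_ineq1_le (- m)). pose proof (exp_pos m).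
  assert (d * exp L >= d * (exp m * (1 + (L - m)))) by (rewrite E1; apply Rmult_ge_compat_l; [lra| apply Rle_ge, Rmult_le_compat_l; lra]).
  assert (1 >= exp m * (1 + - m)) by (rewrite E2 at 1; apply Rle_ge, Rmult_le_compat_l; lra).
  assert ((1 - d) * 1 >= (1-d) * (exp m * (1 + - m))) by (apply Rmult_ge_compat_l; lra).
  assert (d * (exp m * (1 + (L - m))) + (1-d) * (exp m * (1 + - m)) = exp m) by (unfold m; ring).
  lra. Qed.

Lemma bernoulli r d : 0 <= r -> 0 < d <= 1 -> rpow r d <= 1 + d * (r - 1).
Proof. intros Hr Hd. destruct (Req_dec r 0) as [->|Hne].
  - rewrite rpow_0. lra.
  - rewrite rpow_pos by lra. unfold Rpower.
    pose proof (exp_convex d (ln r) ltac:(lra)). rewrite exp_ln in H by lra. lra. Qed.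

Lemma Rpower_mult_r q d : 0 < q -> Rpower q d = Rpower q (d - 1) * q.
Proof. intros Hq. rewrite <- (Rpower_1 q) at 3 by lra. rewrite <- Rpower_plus. f_equal; ring. Qed.

Lemma rpow_tangent d q w : 0 < d <= 1 -> 0 < q -> 0 <= w ->
  rpow w d <= rpow q d + d * Rpower q (d - 1) * (w - q).
Proof. intros Hd Hq Hw. rewrite (rpow_pos q) by lra.
  pose proof (bernoulli (w / q) d ltac:(apply Rle_mult_inv_pos; lra) Hd) as B.
  pose proof (Rpower_gt0 q (d - 1)) as Hp.
  destruct (Req_dec w 0) as [->|Hne].
  - rewrite rpow_0. rewrite (Rpower_mult_r q d) by lra.
    assert (0 <= Rpower q (d - 1) * q * (1 - d)) by (apply Rmult_le_pos; [apply Rmult_le_pos|]; lra). nra.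
  - rewrite rpow_pos in B |- * by (try apply Rdiv_lt_0_compat; lra).
    replace w with ((w / q) * q) at 1 by (field; lra).
    rewrite <- Rpower_mult_distr by (try apply Rdiv_lt_0_compat; lra).
    rewrite (Rpower_mult_r q d) by lra.
    assert (Rpower (w / q) d * (Rpower q (d - 1) * q) <= (1 + d * (w / q - 1)) * (Rpower q (d - 1) * q)).
    { apply Rmult_le_compat_r; [|lra]. apply Rmult_le_pos; lra. }
    replace ((1 + d * (w / q - 1)) * (Rpower q (d - 1) * q)) with (Rpower q (d - 1) * q + d * Rpower q (d - 1) * (w - q)) in H by (field; lra).
    lra. Qed.

Lemma rpow_lt d w q : 0 < d -> 0 <= w < q -> rpow w d < rpow q d.
Proof. intros Hd Hwq. rewrite (rpow_pos q) by lra. destruct (Req_dec w 0) as [->|Hne].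
  - rewrite rpow_0. apply Rpower_gt0.
  - rewrite rpow_pos by lra. apply Rlt_Rpower_l; lra. Qed.

Lemma rpow_le d w q : 0 < d -> 0 <= w <= q -> rpow w d <= rpow q d.
Proof. intros Hd Hwq. destruct (Req_dec w q) as [->|]; [lra|]. left; apply rpow_lt; lra. Qed.


Lemma rpow_cont d q eps : 0 < d -> 0 <= q -> 0 < eps -> exists eta, 0 < eta /\
  forall w, 0 <= w -> Rabs (w - q) < eta -> Rabs (rpow w d - rpow q d) < eps.
Proof. intros Hd Hq He. destruct (Req_dec q 0) as [->|Hq0].
  - exists (Rpower eps (/ d)). split; [apply Rpower_gt0|]. intros w Hw Hwe.
    rewrite rpow_0. rewrite Rminus_0_r in *. destruct (Req_dec w 0) as [->|Hw0].
    + rewrite rpow_0, Rabs_R0. lra.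
    + rewrite rpow_pos by lra. rewrite Rabs_pos_eq in * by (try lra; left; apply Rpower_gt0).
      replace eps with (Rpower (Rpower eps (/ d)) d).
      * apply Rlt_Rpower_l; lra.
      * rewrite Rpower_mult. replace (/ d * d) with 1 by (field; lra). apply Rpower_1; lra.
  - assert (Hdp : derivable_pt (fun x => Rpower x d) q).
    { exists (d * Rpower q (d - 1)). apply derivable_pt_lim_power; lra. }
    pose proof (derivable_continuous_pt _ _ Hdp) as Hc.
    unfold continuity_pt, continue_in, limit1_in, limit_in in Hc. simpl in Hc.
    destruct (Hc eps He) as [alp [Halp Hx]].
    exists (Rmin alp q). split; [apply Rmin_pos; lra|]. intros w Hw Hwq.
    assert (Hwq1 : Rabs (w - q) < alp) by (eapply Rlt_le_trans; [exact Hwq| apply Rmin_l]).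
    assert (Hwq2 : Rabs (w - q) < q) by (eapply Rlt_le_trans; [exact Hwq| apply Rmin_r]).
    assert (0 < w) by (apply Rabs_def2 in Hwq2; lra).
    rewrite !rpow_pos by lra. destruct (Req_dec w q) as [->|Hne].
    + rewrite Rminus_diag, Rabs_R0; lra.
    + apply Hx. split; [split; [exact I| auto]|]. unfold R_dist. auto. Qed.

Lemma Rmax0_lip a b : Rabs (Rmax a 0 - Rmax b 0) <= Rabs (a - b).
Proof. unfold Rmax. destruct (Rle_dec a 0); destruct (Rle_dec b 0);
  unfold Rabs; repeat destruct Rcase_abs; lra. Qed.

Lemma pdem_cont al be d q eps : 0 < be -> 0 < d -> 0 <= q -> 0 < eps -> exists eta, 0 < eta /\
  forall w, 0 <= w -> Rabs (w - q) < eta -> Rabs (pdem al be d w - pdem al be d q) < eps.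
Proof. intros Hb Hd Hq He. destruct (rpow_cont d q (eps / be) Hd Hq) as [eta [Heta H]].
  { apply Rdiv_lt_0_compat; lra. }
  exists eta. split; auto. intros w Hw Hwq. specialize (H w Hw Hwq). unfold pdem.
  eapply Rle_lt_trans; [apply Rmax0_lip|].
  replace (al - be * rpow w d - (al - be * rpow q d)) with (- be * (rpow w d - rpow q d)) by ring.
  rewrite Rabs_mult, Rabs_Ropp, (Rabs_pos_eq be) by lra.
  apply (Rmult_lt_compat_l be) in H; [|lra]. replace (be * (eps / be)) with eps in H by (field; lra). lra. Qed.

Lemma pext_cont al be d z : 0 < be -> 0 < d -> continuous (fun q => pdem al be d (Rmax q 0)) z.
Proof. intros Hb Hd. apply continuity_pt_filterlim.
  unfold continuity_pt, continue_in, limit1_in, limit_in. simpl. intros eps He.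
  destruct (pdem_cont al be d (Rmax z 0) eps Hb Hd (Rmax_r _ _) He) as [eta [Heta H]].
  exists eta. split; auto. intros y [_ Hy]. unfold R_dist in *. apply H.
  - apply Rmax_r.
  - eapply Rle_lt_trans; [|exact Hy]. unfold Rmax. destruct (Rle_dec y 0); destruct (Rle_dec z 0);
    unfold Rabs; repeat destruct Rcase_abs; lra. Qed.

Lemma pdem_exRInt al be d A B : 0 < be -> 0 < d -> 0 <= A <= B -> ex_RInt (pdem al be d) A B.
Proof. intros Hb Hd HAB. apply (ex_RInt_ext (fun q => pdem al be d (Rmax q 0))).
  - intros q Hq. rewrite Rmin_left in Hq by lra. rewrite Rmax_right in Hq by lra. rewrite (Rmax_left q 0) by lra. auto.
  - apply (ex_RInt_continuous (V:=R_CompleteNormedModule)). intros; apply pext_cont; auto. Qed.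

Lemma RInt_eq f A B : ex_RInt f A B -> Defs.RInt f A B = RInt f A B.
Proof. intros H. pose proof (ex_RInt_Reals_0 _ _ _ H) as pr. unfold Defs.RInt.
  destruct (epsilon_spec (inhabits 0) (fun I => exists pr : Riemann_integrable f A B, RiemannInt pr = I)) as [pr' Hpr'].
  { exists (RiemannInt pr). exists pr. auto. }
  rewrite <- Hpr'. symmetry. apply RInt_Reals. Qed.

Lemma RInt_lin f u v A B : (forall q, f q = u + v * q) -> is_RInt f A B (u * (B - A) + v * (B * B - A * A) / 2).
Proof. intros Hf. apply (is_RInt_ext (fun q => u + v * q)). { intros; rewrite Hf; auto. }
  assert (HI : is_RInt (fun q => u + v * q) A B
    (minus ((fun q => u * q + v * (q * q) / 2) B) ((fun q => u * q + v * (q * q) / 2) A))).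
  { apply (is_RInt_derive (V:=R_CompleteNormedModule) (fun q => u * q + v * (q * q) / 2)).
  - intros q _. auto_derive; auto. change (u * 1 + v * (1 * q + q * 1) * / 2 = u + v * q); field.
  - intros q _. apply continuity_pt_filterlim. apply continuity_pt_plus. apply continuity_pt_const. intros a b; auto.
    apply continuity_pt_mult. apply continuity_pt_const. intros a b; auto. apply derivable_continuous_pt, derivable_pt_id. }
  replace (u * (B - A) + v * (B * B - A * A) / 2) with
    (minus ((fun q => u * q + v * (q * q) / 2) B) ((fun q => u * q + v * (q * q) / 2) A)); auto.
  unfold minus, plus, opp. simpl. field. Qed.


Definition convex0 (h : R -> R) := forall a b t, 0 <= a -> 0 <= b -> 0 <= t <= 1 ->
  h (t * a + (1 - t) * b) <= t * h a + (1 - t) * h b.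

Lemma conv_sub h k x : convex0 h -> 0 <= x ->
  (forall y, 0 <= y -> h y - h x >= (y - x) * k y) ->
  (forall eps, 0 < eps -> exists eta, 0 < eta /\ forall y, 0 <= y -> Rabs (y - x) < eta -> Rabs (k y - k x) < eps) ->
  forall y, 0 <= y -> h y - h x >= (y - x) * k x.
Proof. intros Hc Hx Hk Hcont y Hy.
  destruct (Req_dec y x) as [->|Hne]; [lra|].
  apply Rnot_lt_ge. intros Hlt.
  assert (Hd : 0 < Rabs (y - x)) by (apply Rabs_pos_lt; lra).
  set (eps := ((y - x) * k x - (h y - h x)) / Rabs (y - x)).
  assert (Heps : 0 < eps) by (apply Rdiv_lt_0_compat; lra).
  destruct (Hcont eps Heps) as [eta [Heta Hke]].
  set (t := Rmin 1 (eta / (2 * Rabs (y - x)))).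
  assert (Ht0 : 0 < t) by (apply Rmin_pos; [lra| apply Rdiv_lt_0_compat; lra]).
  assert (Ht1 : t <= 1) by apply Rmin_l.
  assert (Ht2 : t <= eta / (2 * Rabs (y - x))) by apply Rmin_r.
  set (z := t * y + (1 - t) * x).
  assert (Hz : 0 <= z) by (unfold z; nra).
  assert (Hzx : Rabs (z - x) < eta).
  { replace (z - x) with (t * (y - x)) by (unfold z; ring). rewrite Rabs_mult, (Rabs_pos_eq t) by lra.
    apply (Rmult_le_compat_r (Rabs (y - x))) in Ht2; [|lra].
    replace (eta / (2 * Rabs (y - x)) * Rabs (y - x)) with (eta / 2) in Ht2 by (field; lra). lra. }
  specialize (Hke z Hz Hzx).
  pose proof (Hc y x t Hy Hx (conj (Rlt_le _ _ Ht0) Ht1)) as Hconv. fold z in Hconv.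
  pose proof (Hk z Hz) as Hkz.
  replace (z - x) with (t * (y - x)) in Hkz by (unfold z; ring).
  assert (Hyx : h y - h x >= (y - x) * k z).
  { assert (t * (h y - h x) >= t * ((y - x) * k z)) by lra.
    apply Rle_ge. apply (Rmult_le_reg_l t); lra. }
  assert (Hb : (y - x) * (k z - k x) >= - (Rabs (y - x) * Rabs (k z - k x))).
  { rewrite <- Rabs_mult. pose proof (Rle_abs (- ((y - x) * (k z - k x)))). rewrite Rabs_Ropp in H. lra. }
  assert (Rabs (y - x) * Rabs (k z - k x) < Rabs (y - x) * eps) by (apply Rmult_lt_compat_l; lra).
  assert (Rabs (y - x) * eps = (y - x) * k x - (h y - h x)) by (unfold eps; field; lra).
  lra. Qed.

Lemma firm_sub (p h : R -> R) Z xn P b : convex0 h -> 0 <= xn -> 0 <= Z -> P = p (Z + xn) ->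
  (forall y, 0 <= y -> 0 <= xn * (p (Z + y) - P + b * (y - xn))) ->
  (forall eps, 0 < eps -> exists eta, 0 < eta /\ forall w, 0 <= w -> Rabs (w - (Z + xn)) < eta -> Rabs (p w - p (Z + xn)) < eps) ->
  (forall y, 0 <= y -> y * p (Z + y) - h y <= xn * P - h xn) ->
  forall y, 0 <= y -> h y - h xn >= (y - xn) * (P - b * xn).
Proof. intros Hc Hxn HZ HP Htan Hpc Heq.
  intros y0 Hy0.
  assert (HR := conv_sub h (fun y => p (Z + y) - b * xn) xn Hc Hxn).
  cbv beta in HR. rewrite <- HP in HR. apply HR; auto.
  - intros y Hy. specialize (Heq y Hy). specialize (Htan y Hy). nra.
  - intros eps He. destruct (Hpc eps He) as [eta [Heta H]]. exists eta. split; auto.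
    intros y Hy Hyx. replace (p (Z + y) - b * xn - (P - b * xn)) with (p (Z + y) - p (Z + xn)) by (rewrite HP; ring).
    apply H; [lra|]. replace (Z + y - (Z + xn)) with (y - xn) by ring. auto. Qed.


Lemma phi_ge1 c : 1 <= phi_f c.
Proof. unfold phi_f. apply Rmax_r. Qed.

Lemma f_bounds c : 1 <= c -> 0 <= f_bound c <= 1.
Proof. intros Hc. unfold f_bound. pose proof (phi_ge1 c). set (ph := phi_f c) in *.
  assert (0 < ph ^ 2 + 2 * ph + c) by nra.
  split.
  - apply Rle_mult_inv_pos; nra.
  - apply (Rmult_le_reg_r (ph ^ 2 + 2 * ph + c)); auto. unfold Rdiv. rewrite Rmult_assoc, Rinv_l by lra. nra. Qed.

Lemma key c X s : 1 <= c -> 0 <= s <= X -> f_bound c * (X * X + 2 * s * X + c * (s * s)) <= X * X + 2 * (s * s).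
Proof. intros Hc Hs. unfold f_bound. pose proof (phi_ge1 c). set (ph := phi_f c) in *.
  assert (Hpos : 0 < ph ^ 2 + 2 * ph + c) by nra.
  assert (H2 : (ph ^ 2 + 2) * (X * X + 2 * s * X + c * (s * s)) <= (X * X + 2 * (s * s)) * (ph ^ 2 + 2 * ph + c)).
  { unfold ph, phi_f. set (S := sqrt (c ^ 2 - 4 * c + 12)).
    assert (HS2 : S * S = c ^ 2 - 4 * c + 12) by (unfold S; apply sqrt_sqrt; nra).
    assert (HS0 : 0 <= S) by apply sqrt_pos.
    unfold Rmax. destruct (Rle_dec ((2 - c + S) / 2) 1) as [Hle|Hgt].
    - assert (c >= 3) by nra.
      assert (0 <= (X - s) * (c * X + (c - 6) * s)) by (apply Rmult_le_pos; nra).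
      assert (0 <= c * (s * s)) by nra. nra.
    - set (r := (2 - c + S) / 2) in *.
      assert (Hr : r ^ 2 = (2 - c) * r + 2) by (unfold r; nra).
      assert (E : (X * X + 2 * (s * s)) * (r ^ 2 + 2 * r + c) - (r ^ 2 + 2) * (X * X + 2 * s * X + c * (s * s))
                 = (2 * r + c - 2) * (X - r * s) ^ 2).
      { assert (Hz : r ^ 2 - (2 - c) * r - 2 = 0) by lra.
        transitivity ((2 * r + c - 2) * (X - r * s) ^ 2 + 2 * s * (X - r * s) * (r ^ 2 - (2 - c) * r - 2)); [ring|].
        rewrite Hz. ring. }
      apply Rnot_le_lt in Hgt. assert (0 <= (2 * r + c - 2) * (X - r * s) ^ 2) by (apply Rmult_le_pos; [lra| apply pow2_ge_0]). lra. }
  unfold Rdiv. rewrite Rmult_comm, <- Rmult_assoc. apply (Rmult_le_reg_r (ph ^ 2 + 2 * ph + c)); auto.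
  rewrite Rmult_assoc, (Rmult_comm (/ _)), <- Rmult_assoc, Rmult_assoc, Rinv_r, Rmult_1_r by lra. lra. Qed.

Lemma cbar_ge1 d : 0 < d <= 1 -> 1 <= Rpower (d + 1) ((1 - d) / d).
Proof. intros Hd. unfold Rpower. 
  assert (0 <= (1 - d) / d * ln (d + 1)).
  { apply Rmult_le_pos. apply Rle_mult_inv_pos; lra. rewrite <- ln_1. left. apply ln_increasing; lra. }
  pose proof (exp_ineq1_le ((1 - d) / d * ln (d + 1))). lra. Qed.


Lemma pdem_ge al be d q : al - be * rpow q d <= pdem al be d q.
Proof. apply Rmax_l. Qed.
Lemma pdem_ge0 al be d q : 0 <= pdem al be d q.
Proof. apply Rmax_r. Qed.
Lemma pdem_eq al be d q : 0 <= al - be * rpow q d -> pdem al be d q = al - be * rpow q d.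
Proof. intros H. unfold pdem. apply Rmax_left. lra. Qed.
Lemma pdem_pos_eq al be d q : 0 < pdem al be d q -> pdem al be d q = al - be * rpow q d.
Proof. unfold pdem. unfold Rmax. destruct (Rle_dec (al - be * rpow q d) 0); lra. Qed.

Lemma pdem_tangent al be d X P b w : 0 < be -> 0 < d <= 1 -> 0 < X -> 0 < P -> P = pdem al be d X ->
  b = be * d * Rpower X (d - 1) -> 0 <= w -> P - b * (w - X) <= pdem al be d w.
Proof. intros Hb Hd HX HP HPe Hbe Hw. pose proof (rpow_tangent d X w Hd HX Hw).
  pose proof (pdem_ge al be d w). rewrite HPe, (pdem_pos_eq al be d X) by lra. subst b.
  assert (be * rpow w d <= be * (rpow X d + d * Rpower X (d - 1) * (w - X))) by (apply Rmult_le_compat_l; lra). nra. Qed.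

Lemma int_chas al be d A B C0 : 0 < be -> 0 < d -> 0 <= A <= B -> B <= C0 ->
  RInt (pdem al be d) A C0 = RInt (pdem al be d) A B + RInt (pdem al be d) B C0.
Proof. intros. symmetry. apply (RInt_Chasles (V:=R_CompleteNormedModule)); apply pdem_exRInt; auto; lra. Qed.

Lemma int_ge_const f k A B : A <= B -> ex_RInt f A B -> (forall q, A < q < B -> k <= f q) -> k * (B - A) <= RInt f A B.
Proof. intros HAB Hex H. replace (k * (B - A)) with (RInt (fun _ => k) A B).
  - apply RInt_le; auto. apply ex_RInt_const.
  - rewrite RInt_const. unfold scal; simpl. unfold mult; simpl. ring. Qed.

Lemma int_le_const f k A B : A <= B -> ex_RInt f A B -> (forall q, A < q < B -> f q <= k) -> RInt f A B <= k * (B - A).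
Proof. intros HAB Hex H. replace (k * (B - A)) with (RInt (fun _ => k) A B).
  - apply RInt_le; auto. apply ex_RInt_const.
  - rewrite RInt_const. unfold scal; simpl. unfold mult; simpl. ring. Qed.

Lemma int_ge_lin f u v A B : A <= B -> ex_RInt f A B -> (forall q, A < q < B -> u + v * q <= f q) ->
  u * (B - A) + v * (B * B - A * A) / 2 <= RInt f A B.
Proof. intros HAB Hex H. rewrite <- (is_RInt_unique (fun q => u + v * q) A B _ (RInt_lin _ u v A B (fun q => eq_refl))).
  apply RInt_le; auto. exists (u * (B - A) + v * (B * B - A * A) / 2). apply RInt_lin; auto. Qed.

Lemma int_le_lin f u v A B : A <= B -> ex_RInt f A B -> (forall q, A < q < B -> f q <= u + v * q) ->
  RInt f A B <= u * (B - A) + v * (B * B - A * A) / 2.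
Proof. intros HAB Hex H. rewrite <- (is_RInt_unique (fun q => u + v * q) A B _ (RInt_lin _ u v A B (fun q => eq_refl))).
  apply RInt_le; auto. exists (u * (B - A) + v * (B * B - A * A) / 2). apply RInt_lin; auto. Qed.

Lemma CS_bound al be d X P b : 0 < be -> 0 < d <= 1 -> 0 < X -> 0 < P -> P = pdem al be d X ->
  b = be * d * Rpower X (d - 1) -> P * X + b * X * X / 2 <= RInt (pdem al be d) 0 X.
Proof. intros Hb Hd HX HP HPe Hbe.
  assert (H := int_ge_lin (pdem al be d) (P + b * X) (- b) 0 X ltac:(lra) (pdem_exRInt al be d 0 X Hb ltac:(lra) ltac:(lra))).
  lapply H.
  - intros H'. replace (P * X + b * X * X / 2) with ((P + b * X) * (X - 0) + - b * (X * X - 0 * 0) / 2) by field. auto.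
  - intros q Hq. pose proof (pdem_tangent al be d X P b q Hb Hd HX HP HPe Hbe ltac:(lra)). lra. Qed.

Lemma exp_le_mono x y : x <= y -> exp x <= exp y.
Proof. intros [H| ->]; [left; apply exp_increasing; auto| lra]. Qed.

Lemma exp_le_inv' x y : exp x <= exp y -> x <= y.
Proof. intros H. destruct (Rle_dec x y); auto. apply Rnot_le_lt in n. apply exp_increasing in n. lra. Qed.

Lemma J_bound al be d X P b s Y : 0 < be -> 0 < d <= 1 -> 0 < X -> 0 < P -> P = pdem al be d X ->
  b = be * d * Rpower X (d - 1) -> 0 < s <= X -> 0 <= P - b * s -> 0 <= Y ->
  RInt (pdem al be d) 0 Y - (P - b * s) * Y <=
  RInt (pdem al be d) 0 X - P * X + b * s * X + Rpower (d + 1) ((1 - d) / d) * b * s * s / 2.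
Proof. intros Hb Hd HX HP HPe Hbe Hs Ha HY.
  set (a := P - b * s) in *. set (p := pdem al be d).
  assert (HuX : rpow X d = Rpower X d) by (apply rpow_pos; lra).
  assert (HPu : P = al - be * Rpower X d) by (rewrite HPe, pdem_pos_eq, HuX by lra; auto).
  assert (Hbpos : 0 < b) by (rewrite Hbe; pose proof (Rpower_gt0 X (d - 1)); apply Rmult_lt_0_compat; nra).
  set (z := (al - a) / be).
  assert (Hz : z = Rpower X d + b * s / be) by (unfold z, a; rewrite HPu; field; lra).
  assert (Hzpos : 0 < z) by (rewrite Hz; pose proof (Rpower_gt0 X d); assert (0 < b * s / be) by (apply Rdiv_lt_0_compat; nra); lra).
  set (Ys := Rpower z (/ d)).
  assert (HYs0 : 0 < Ys) by apply Rpower_gt0.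
  assert (HuYs : rpow Ys d = z).
  { rewrite rpow_pos by lra. unfold Ys. rewrite Rpower_mult. replace (/ d * d) with 1 by (field; lra). apply Rpower_1; lra. }
  assert (Hza : al - be * z = a) by (unfold z; field; lra).
  assert (Hge : forall q, 0 <= q <= Ys -> a <= p q).
  { intros q Hq. pose proof (rpow_le d q Ys ltac:(lra) Hq). pose proof (pdem_ge al be d q). unfold p.
    assert (be * rpow q d <= be * z) by (apply Rmult_le_compat_l; lra). lra. }
  assert (Hle : forall q, Ys <= q -> p q <= a).
  { intros q Hq. pose proof (rpow_le d Ys q ltac:(lra) ltac:(lra)). unfold p, pdem.
    assert (be * z <= be * rpow q d) by (apply Rmult_le_compat_l; lra). apply Rmax_lub; lra. }
  assert (HXYs : X < Ys).
  { destruct (Rlt_dec X Ys) as [|Hn]; auto. apply Rnot_lt_le in Hn.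
    pose proof (rpow_le d Ys X ltac:(lra) ltac:(lra)). rewrite HuX, HuYs in H.
    assert (0 < b * s / be) by (apply Rdiv_lt_0_compat; nra). lra. }
  (* chord *)
  assert (Hchord : forall q, X < q < Ys -> p q <= (Ys * P - X * a) / (Ys - X) + (a - P) / (Ys - X) * q).
  { intros q Hq. pose proof (rpow_tangent d q X Hd ltac:(lra) ltac:(lra)) as T1.
    pose proof (rpow_tangent d q Ys Hd ltac:(lra) ltac:(lra)) as T2.
    rewrite HuX in T1. rewrite HuYs in T2.
    set (D := d * Rpower q (d - 1)) in *.
    assert (Hcomb : (Ys - q) * Rpower X d + (q - X) * z <= (Ys - X) * rpow q d).
    { assert ((Ys - q) * Rpower X d <= (Ys - q) * (rpow q d + D * (X - q))) by (apply Rmult_le_compat_l; lra).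
      assert ((q - X) * z <= (q - X) * (rpow q d + D * (Ys - q))) by (apply Rmult_le_compat_l; lra).
      nra. }
    assert (Hpq : p q = al - be * rpow q d).
    { unfold p. apply pdem_eq. pose proof (rpow_le d q Ys ltac:(lra) ltac:(lra)).
      assert (be * rpow q d <= be * z) by (apply Rmult_le_compat_l; lra). lra. }
    rewrite Hpq. apply (Rmult_le_reg_l (Ys - X)); [lra|].
    replace ((Ys - X) * ((Ys * P - X * a) / (Ys - X) + (a - P) / (Ys - X) * q)) with ((Ys - q) * P + (q - X) * a) by (field; lra).
    rewrite HPu, <- Hza.
    assert (be * ((Ys - q) * Rpower X d + (q - X) * z) <= be * ((Ys - X) * rpow q d)) by (apply Rmult_le_compat_l; lra).
    nra. }
  assert (Hgap : Ys - X <= Rpower (d + 1) ((1 - d) / d) * s).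
  { pose proof (rpow_tangent d Ys X Hd HYs0 ltac:(lra)) as T. rewrite HuX, HuYs in T.
    assert (HbY : d * Rpower Ys (d - 1) * (Ys - X) <= d * Rpower X (d - 1) * s).
    { assert (b * s / be = d * Rpower X (d - 1) * s) by (rewrite Hbe; field; lra). lra. }
    assert (HbY' : Rpower Ys (d - 1) * (Ys - X) <= Rpower X (d - 1) * s).
    { apply (Rmult_le_reg_l d); lra. }
    set (lX := ln X). set (lY := ln Ys).
    assert (Hlog : d * (lY - lX) <= ln (d + 1)).
    { apply exp_le_inv'. rewrite exp_ln by lra.
      assert (E1 : exp (d * (lY - lX)) = z / Rpower X d).
      { rewrite <- HuYs, rpow_pos by lra. unfold Rpower, lY, lX. unfold Rdiv. rewrite <- exp_Ropp, <- exp_plus. f_equal. ring. }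
      rewrite E1. set (Q := Rpower X (d - 1)).
      assert (HQ : 0 < Q) by apply Rpower_gt0.
      assert (HRX : Rpower X d = Q * X) by (unfold Q; apply Rpower_mult_r; lra).
      assert (Hz' : z = Q * X + d * Q * s) by (rewrite Hz, HRX, Hbe; unfold Q; field; lra).
      rewrite HRX. apply (Rmult_le_reg_r (Q * X)); [nra|]. unfold Rdiv. rewrite Rmult_assoc, Rinv_l by nra.
      rewrite Hz'. assert (d * Q * s <= d * Q * X) by (apply Rmult_le_compat_l; nra). lra. }
    assert (Hcmp : Rpower X (d - 1) <= Rpower (d + 1) ((1 - d) / d) * Rpower Ys (d - 1)).
    { unfold Rpower. rewrite <- exp_plus. apply exp_le_mono. fold lX lY.
      assert ((1 - d) / d * (d * (lY - lX)) <= (1 - d) / d * ln (d + 1)).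
      { apply Rmult_le_compat_l; auto. apply Rle_mult_inv_pos; lra. }
      replace ((1 - d) / d * (d * (lY - lX))) with ((1 - d) * (lY - lX)) in H by (field; lra). lra. }
    pose proof (Rpower_gt0 Ys (d - 1)). pose proof (Rpower_gt0 (d + 1) ((1 - d) / d)).
    apply (Rmult_le_reg_l (Rpower Ys (d - 1))); auto.
    assert (Rpower X (d - 1) * s <= Rpower (d + 1) ((1 - d) / d) * Rpower Ys (d - 1) * s) by (apply Rmult_le_compat_r; lra).
    nra. }
  assert (HJ : RInt p 0 Y - a * Y <= RInt p 0 Ys - a * Ys).
  { destruct (Rle_dec Y Ys) as [HYY|HYY].
    - unfold p. rewrite (int_chas al be d 0 Y Ys) by lra. fold p.
      pose proof (int_ge_const p a Y Ys HYY (pdem_exRInt al be d Y Ys Hb ltac:(lra) ltac:(lra))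
         (fun q Hq => Hge q ltac:(lra))). lra.
    - apply Rnot_le_lt in HYY. unfold p. rewrite (int_chas al be d 0 Ys Y) by lra. fold p.
      pose proof (int_le_const p a Ys Y ltac:(lra) (pdem_exRInt al be d Ys Y Hb ltac:(lra) ltac:(lra))
         (fun q Hq => Hle q ltac:(lra))). lra. }
  assert (HJ2 : RInt p X Ys <= (P + a) * (Ys - X) / 2).
  { pose proof (int_le_lin p _ _ X Ys ltac:(lra) (pdem_exRInt al be d X Ys Hb ltac:(lra) ltac:(lra)) Hchord).
    replace ((P + a) * (Ys - X) / 2) with ((Ys * P - X * a) / (Ys - X) * (Ys - X) + (a - P) / (Ys - X) * (Ys * Ys - X * X) / 2) by (field; lra).
    auto. }
  unfold p in HJ. rewrite (int_chas al be d 0 X Ys) in HJ by lra. fold p in HJ.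
  assert (b * s * (Ys - X) <= b * s * (Rpower (d + 1) ((1 - d) / d) * s)) by (apply Rmult_le_compat_l; nra).
  unfold a in *. nra.
Qed.



Lemma payoff_update p C N x n y : (n < N)%nat ->
  payoff p C N (update x n y) n = y * p (total N x - x n + y) - C n y.
Proof. intros Hn. unfold payoff, total. rewrite sumN_update by auto. rewrite update_same. auto. Qed.

Lemma pdem_0 al be d : 0 < al -> pdem al be d 0 = al.
Proof. intros H. unfold pdem. rewrite rpow_0, Rmult_0_r, Rminus_0_r. apply Rmax_left. lra. Qed.

Lemma pdem_le_al al be d q : 0 < al -> 0 < be -> pdem al be d q <= al.
Proof. intros H1 H2. unfold pdem. pose proof (rpow_nonneg q d). apply Rmax_lub; nra. Qed.

Lemma welfare_eq al be d C N y : 0 < be -> 0 < d -> nonneg_profile N y ->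
  welfare (pdem al be d) C N y = RInt (pdem al be d) 0 (total N y) - sumN N (fun n => C n (y n)).
Proof. intros Hb Hd Hy. unfold welfare. rewrite RInt_eq; auto. apply pdem_exRInt; auto. split; [lra|].
  unfold total. apply sumN_nonneg. auto. Qed.

Lemma cost_nonneg c y : assumption1 c -> 0 <= y -> 0 <= c y.
Proof. intros [_ [_ [Hm [_ H0]]]] Hy. rewrite <- H0. apply Hm. lra. Qed.

Lemma Wpos al be d N C dC0 xS : 0 < al -> 0 < be -> 0 < d ->
  (forall n, (n < N)%nat -> assumption1 (C n)) ->
  (forall n, (n < N)%nat -> right_deriv0 (C n) (dC0 n)) ->
  (exists n, (n < N)%nat /\ dC0 n < pdem al be d 0) ->
  social_opt (pdem al be d) C N xS -> 0 < welfare (pdem al be d) C N xS.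
Proof. intros Ha Hb Hd HA1 Hdr [m [Hm Hdm]] [HnS Hopt].
  rewrite pdem_0 in Hdm by auto. set (e := al - dC0 m).
  assert (He : 0 < e / 3) by (unfold e; lra).
  destruct (Hdr m Hm (e / 3) He) as [del [Hdel Hdq]].
  destruct (pdem_cont al be d 0 (e / 3) Hb Hd ltac:(lra) He) as [eta [Heta Hpc]].
  rewrite pdem_0 in Hpc by auto.
  set (h := Rmin del eta / 2).
  assert (Hh0 : 0 < h) by (unfold h; pose proof (Rmin_pos del eta Hdel Heta); lra).
  assert (Hh1 : h < del) by (unfold h; pose proof (Rmin_l del eta); lra).
  assert (Hh2 : h < eta) by (unfold h; pose proof (Rmin_r del eta); lra).
  set (y := update (fun _ => 0) m h).
  assert (Hy : nonneg_profile N y).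
  { intros n Hn. unfold y, update. destruct (Nat.eq_dec n m); lra. }
  assert (HW := Hopt y Hy). eapply Rlt_le_trans; [|exact HW].
  rewrite welfare_eq by auto.
  assert (Htot : total N y = h) by (unfold total, y; rewrite sumN_update, sumN_const0 by auto; lra).
  assert (Hcost : sumN N (fun n => C n (y n)) = C m h).
  { rewrite (sumN_ext N _ (update (fun n => C n 0) m (C m h))).
    - rewrite sumN_update by auto. rewrite (sumN_ext N _ (fun _ => 0)), sumN_const0.
      + destruct (HA1 m Hm) as [_ [_ [_ [_ H0]]]]. lra.
      + intros n Hn. destruct (HA1 n Hn) as [_ [_ [_ [_ H0]]]]. auto.
    - intros n Hn. unfold y, update. destruct (Nat.eq_dec n m); subst; auto. }
  rewrite Htot, Hcost.
  assert (HI : (al - e / 3) * (h - 0) <= RInt (pdem al be d) 0 h).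
  { apply int_ge_const; [lra| apply pdem_exRInt; auto; lra|].
    intros q Hq. assert (Rabs (q - 0) < eta) by (rewrite Rminus_0_r, Rabs_pos_eq; lra).
    specialize (Hpc q ltac:(lra) H). apply Rabs_def2 in Hpc. lra. }
  specialize (Hdq h ltac:(lra)). destruct (HA1 m Hm) as [_ [_ [_ [_ H0]]]].
  rewrite H0, Rminus_0_r in Hdq. apply Rabs_def2 in Hdq. destruct Hdq as [Hdq _].
  assert (C m h < (dC0 m + e / 3) * h).
  { assert (E : C m h = (C m h / h) * h) by (field; lra). rewrite E.
    apply Rmult_lt_compat_r; lra. }
  assert (0 < e / 3 * h) by (apply Rmult_lt_0_compat; lra).
  unfold e in *. nra. Qed.

Theorem mainTheorem15
  (alpha beta delta : R) (N : nat) (C : nat -> R -> R) (dC0 : nat -> R)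
  (Halpha : 0 < alpha) (Hbeta : 0 < beta) (Hdelta : 0 < delta <= 1)
  (HA1 : forall n, (n < N)%nat -> assumption1 (C n))
  (Hd : forall n, (n < N)%nat -> right_deriv0 (C n) (dC0 n))
  (HA3 : exists Rb, 0 < Rb /\
           forall n, (n < N)%nat -> pdem alpha beta delta Rb <= dC0 n)
  (HA4 : exists n, (n < N)%nat /\ dC0 n < pdem alpha beta delta 0)
  (x xS : nat -> R)
  (Hx : cournot_eq (pdem alpha beta delta) C N x)
  (HxS : social_opt (pdem alpha beta delta) C N xS) :
  f_bound (Rpower (delta + 1) ((1 - delta) / delta))
    <= efficiency (pdem alpha beta delta) C N x xS.
Proof.
  pose proof (Wpos alpha beta delta N C dC0 xS Halpha Hbeta ltac:(lra) HA1 Hd HA4 HxS) as HWS.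
  unfold efficiency.
  rewrite (welfare_eq alpha beta delta C N x) by (auto; try lra; apply Hx).
  rewrite (welfare_eq alpha beta delta C N xS) in * by (auto; try lra; apply HxS).
  set (cb := Rpower (delta + 1) ((1 - delta) / delta)).
  assert (Hcb : 1 <= cb) by (apply cbar_ge1; auto).
  pose proof (f_bounds cb Hcb) as Hf.
  set (f := f_bound cb) in *.
  set (p := pdem alpha beta delta) in *.
  destruct Hx as [Hxn Heq]. destruct HxS as [HxSn Hopt].
  set (X := total N x).
  assert (HX0 : 0 <= X) by (apply sumN_nonneg; auto).
  assert (Hterm : forall n, (n < N)%nat -> x n <= X) by (intros; apply sumN_term; auto).
  assert (Hcvx : forall n, (n < N)%nat -> convex0 (C n)) by (intros n Hn; destruct (HA1 n Hn) as [H _]; exact H).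
  assert (HC0 : forall n, (n < N)%nat -> C n 0 = 0) by (intros n Hn; destruct (HA1 n Hn) as [_ [_ [_ [_ H]]]]; exact H).
  assert (HCnn : forall n y, (n < N)%nat -> 0 <= y -> 0 <= C n y) by (intros; apply cost_nonneg; auto).
  assert (Heq' : forall n y, (n < N)%nat -> 0 <= y ->
     y * p ((X - x n) + y) - C n y <= x n * p ((X - x n) + x n) - C n (x n)).
  { intros n y Hn Hy. specialize (Heq n y Hn Hy). rewrite payoff_update in Heq by auto.
    unfold payoff in Heq. fold X in Heq. replace (X - x n + x n) with X by ring. auto. }
  assert (HpX : forall n, (n < N)%nat -> p ((X - x n) + x n) = p X) by (intros; f_equal; ring).
  set (WS := RInt p 0 (total N xS) - sumN N (fun n => C n (xS n))) in *.
  apply (Rmult_le_reg_r WS); auto.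
  unfold Rdiv. rewrite Rmult_assoc, Rinv_l, Rmult_1_r by lra.
  set (YS := total N xS).
  assert (HYS : 0 <= YS) by (apply sumN_nonneg; auto).
  assert (Hcont : forall q, 0 <= q -> forall eps, 0 < eps -> exists eta, 0 < eta /\
     forall w, 0 <= w -> Rabs (w - q) < eta -> Rabs (p w - p q) < eps).
  { intros q Hq eps He. apply pdem_cont; auto; lra. }
  assert (HZ : forall n, (n < N)%nat -> 0 <= X - x n) by (intros n Hn; specialize (Hterm n Hn); lra).
  assert (HSCS0 : 0 <= sumN N (fun n => C n (xS n))) by (apply sumN_nonneg; intros; apply HCnn; auto).
  destruct (Req_dec X 0) as [HXz|HXnz].
  -
    exfalso.
    assert (Hx0 : forall n, (n < N)%nat -> x n = 0) by (intros n Hn; specialize (Hterm n Hn); specialize (Hxn n Hn); lra).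
    assert (Hlow : forall n y, (n < N)%nat -> 0 <= y -> alpha * y <= C n y).
    { intros n y Hn Hy.
      pose proof (firm_sub p (C n) (X - x n) (x n) (p ((X - x n) + x n)) 0 (Hcvx n Hn) (Hxn n Hn) (HZ n Hn) eq_refl) as HF.
      lapply HF; [clear HF; intros HF|].
      2:{ intros y0 Hy0. rewrite Hx0 by auto. lra. }
      assert (Hq0 : 0 <= X - x n + x n) by (specialize (HZ n Hn); specialize (Hxn n Hn); lra).
      specialize (HF (Hcont _ Hq0) (fun y Hy => Heq' n y Hn Hy) y Hy).
      rewrite Hx0, HXz in HF by auto. replace (0 - 0 + 0) with 0 in HF by ring.
      unfold p in HF. rewrite pdem_0 in HF by auto. rewrite HC0 in HF by auto. lra. }
    assert (HS1 : alpha * YS <= sumN N (fun n => C n (xS n))).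
    { unfold YS, total. rewrite <- sumN_scal. apply sumN_le. intros; apply Hlow; auto. }
    assert (HS2 : RInt p 0 YS <= alpha * (YS - 0)).
    { apply int_le_const; auto. apply pdem_exRInt; auto; lra. intros; apply pdem_le_al; auto. }
    unfold WS in HWS. fold YS in HWS. lra.
  - assert (HXp : 0 < X) by lra.
    destruct (Rlt_dec 0 (p X)) as [HP|HP0].
    +
      set (P := p X) in *.
      set (b := beta * delta * Rpower X (delta - 1)).
      assert (Hbpos : 0 < b) by (unfold b; pose proof (Rpower_gt0 X (delta - 1)); apply Rmult_lt_0_compat; nra).
      assert (HN : (0 < N)%nat) by (destruct HA4 as [n [Hn _]]; lia).
      destruct (argmax N x HN) as [m [Hm Hmax]].
      set (s := x m).
      assert (HsX : s <= X) by (apply Hterm; auto).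
      assert (Hspos : 0 < s).
      { destruct (Rlt_dec 0 s) as [|Hns]; auto. exfalso. apply Rnot_lt_le in Hns.
        assert (X <= sumN N (fun _ => 0)) by (apply sumN_le; intros n Hn; specialize (Hmax n Hn); fold s in Hmax; lra).
        rewrite sumN_const0 in H. lra. }
      assert (Hsub : forall n y, (n < N)%nat -> 0 <= y -> C n y - C n (x n) >= (y - x n) * (P - b * x n)).
      { intros n y Hn Hy.
        pose proof (firm_sub p (C n) (X - x n) (x n) P b (Hcvx n Hn) (Hxn n Hn) (HZ n Hn) (eq_sym (HpX n Hn))) as HF.
        lapply HF; [clear HF; intros HF|].
        2:{ intros y0 Hy0. apply Rmult_le_pos; [apply Hxn; auto|].
            assert (Hw : 0 <= X - x n + y0) by (specialize (HZ n Hn); lra).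
            pose proof (pdem_tangent alpha beta delta X P b (X - x n + y0) Hbeta Hdelta HXp HP eq_refl eq_refl Hw).
            fold p in H. lra. }
        assert (Hq0 : 0 <= X - x n + x n) by (specialize (HZ n Hn); specialize (Hxn n Hn); lra).
        apply (HF (Hcont _ Hq0)); auto.
        intros y0 Hy0. rewrite <- (HpX n Hn). apply Heq'; auto. }
      set (a := P - b * s).
      assert (Ha : 0 <= a).
      { specialize (Hsub m 0 Hm ltac:(lra)). rewrite HC0 in Hsub by auto. fold s in Hsub.
        specialize (HCnn m s Hm ltac:(lra)).
        assert (0 <= s * a) by (unfold a; nra). 
        destruct (Rle_dec 0 a) as [|Hna]; auto. apply Rnot_le_lt in Hna. nra. }
      set (Q2 := sumN N (fun n => x n * x n)).
      set (SCx := sumN N (fun n => C n (x n))).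
      set (SCS := sumN N (fun n => C n (xS n))) in *.
      assert (HQ2 : s * s <= Q2) by (apply (sumN_term N (fun n => x n * x n)); auto; intros n Hn; specialize (Hxn n Hn); nra).
      assert (HK : SCx <= P * X - b * Q2).
      { replace (P * X - b * Q2) with (sumN N (fun n => P * x n + (- b) * (x n * x n))).
        - apply sumN_le. intros n Hn. specialize (Hsub n 0 Hn ltac:(lra)). rewrite HC0 in Hsub by auto. nra.
        - rewrite sumN_plus, !sumN_scal. unfold X, Q2, total. ring. }
      assert (HSCS : SCx + a * YS - P * X + b * Q2 <= SCS).
      { replace (SCx + a * YS - P * X + b * Q2) with
           (sumN N (fun n => C n (x n) + a * xS n + (- P) * x n + b * (x n * x n))).
        - apply sumN_le. intros n Hn. specialize (Hsub n (xS n) Hn (HxSn n Hn)).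
          specialize (Hmax n Hn). fold s in Hmax. specialize (HxSn n Hn).
          assert (b * x n * xS n <= b * s * xS n) by (apply Rmult_le_compat_r; [lra|]; apply Rmult_le_compat_l; lra).
          unfold a. nra.
        - rewrite !sumN_plus, !sumN_scal. unfold SCx, YS, X, Q2, total. ring. }
      pose proof (J_bound alpha beta delta X P b s YS Hbeta Hdelta HXp HP eq_refl eq_refl ltac:(lra) Ha HYS) as HJ.
      fold p a cb in HJ.
      pose proof (CS_bound alpha beta delta X P b Hbeta Hdelta HXp HP eq_refl eq_refl) as HCS. fold p in HCS.
      pose proof (key cb X s Hcb ltac:(lra)) as Hkey. fold f in Hkey.
      set (IX := RInt p 0 X) in *.
      set (E := IX - P * X - b * X * X / 2).
      set (K := P * X - b * Q2 - SCx).
      assert (HWS' : WS <= E + K + b / 2 * (X * X + 2 * s * X + cb * (s * s))).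
      { unfold WS, E, K. fold YS SCS. nra. }
      assert (HE : 0 <= E) by (unfold E; lra).
      assert (HK0 : 0 <= K) by (unfold K; lra).
      assert (f * WS <= f * (E + K + b / 2 * (X * X + 2 * s * X + cb * (s * s)))) by (apply Rmult_le_compat_l; lra).
      assert (f * (E + K) <= E + K) by nra.
      assert (f * (b / 2 * (X * X + 2 * s * X + cb * (s * s))) <= b / 2 * (X * X + 2 * (s * s))).
      { replace (f * (b / 2 * (X * X + 2 * s * X + cb * (s * s)))) with (b / 2 * (f * (X * X + 2 * s * X + cb * (s * s)))) by ring.
        apply Rmult_le_compat_l; lra. }
      assert (IX - SCx = E + K + b / 2 * (X * X) + b * Q2) by (unfold E, K; field).
      nra.
    +
      assert (HPX : p X = 0) by (pose proof (pdem_ge0 alpha beta delta X); fold p in H; lra).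
      assert (HCx : forall n, (n < N)%nat -> C n (x n) = 0).
      { intros n Hn. specialize (Heq' n 0 Hn ltac:(lra)). rewrite HpX, HPX, HC0 in Heq' by auto.
        specialize (HCnn n (x n) Hn (Hxn n Hn)). lra. }
      assert (HSCx : sumN N (fun n => C n (x n)) = 0).
      { rewrite (sumN_ext N _ (fun _ => 0)), sumN_const0; auto. }
      rewrite HSCx.
      assert (Hzero : forall q, X <= q -> p q <= 0).
      { intros q Hq. pose proof (pdem_ge alpha beta delta X). fold p in H.
        pose proof (rpow_le delta X q ltac:(lra) ltac:(lra)).
        unfold p, pdem. apply Rmax_lub; [|lra]. nra. }
      assert (HIY : RInt p 0 YS <= RInt p 0 X).
      { destruct (Rle_dec YS X) as [HYX|HYX].
        - unfold p. rewrite (int_chas alpha beta delta 0 YS X) by (auto; lra). fold p.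
          pose proof (int_ge_const p 0 YS X HYX ltac:(apply pdem_exRInt; auto; lra)
             (fun q _ => pdem_ge0 alpha beta delta q)). lra.
        - apply Rnot_le_lt in HYX. unfold p. rewrite (int_chas alpha beta delta 0 X YS) by (auto; lra). fold p.
          pose proof (int_le_const p 0 X YS ltac:(lra) ltac:(apply pdem_exRInt; auto; lra)
             (fun q Hq => Hzero q ltac:(lra))). lra. }
      assert (WS <= RInt p 0 X) by (unfold WS; fold YS; lra).
      nra.
Qed.
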